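(* Let $T$ be a rooted tree whose vertices are identified with their preorder labels, and let $u_1,\dots,u_k,v_1,\dots,v_k$ be vertices of $T$ with $u_i\le v_i$ for all $i$. Then $$\mathrm{LCA}(\mathrm{LCA}(u_1,v_1),\mathrm{LCA}(u_2,v_2),\dots,\mathrm{LCA}(u_k,v_k))=\mathrm{LCA}(\min_i u_i,\max_i v_i).$$
   Context: A preorder labeling of $T$: the root receives label $1$; whenever a vertex receives label $\ell$, its children are ordered arbitrarily as $c_1,\dots,c_k$ and child $c_i$ receives label $\ell+1+\sum_{j<i}\#\mathrm{desc}(c_j)$, where $\#\mathrm{desc}(c)$ is the number of descendants of $c$ (including $c$). Vertices are identified with their labels, and $\le$, $\min$, $\max$ refer to labels. Every vertex is an ancestor of itself. $\mathrm{LCA}(w_1,w_2,\dots)$ denotes the lowest common ancestor in $T$: a common ancestor of all $w_i$ such that no strict descendant of it is a common ancestor of all $w_i$. *)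

(* Defs.v *)
(* A rooted tree with vertex set {1,...,n} (vertices = their
   labels), root 1, given by a parent function [par] (par 1 is irrelevant). *)
From mathcomp Require Import all_boot.
Set Implicit Arguments. Unset Strict Implicit. Unset Printing Implicit Defensive.

(* [par] describes a rooted tree on {1..n} with root 1: every non-root vertex
   has its parent in {1..n}, and iterating the parent map reaches the root
   (hence there are no cycles). *)
Definition is_rooted_tree (n : nat) (par : nat -> nat) : Prop :=
  1 <= n /\
  forall v, 2 <= v <= n -> 1 <= par v <= n /\ exists k, iter k par v = 1.

Definition is_vertex (n v : nat) : bool := (1 <= v <= n).

(* a is an ancestor of v (reflexive): a is reached by walking up from v,
   stopping at the root. In a tree on n vertices a path to the root has
   fewer than n steps, so the bound k <= n loses nothing. *)
Definition anc (n : nat) (par : nat -> nat) (a v : nat) : bool :=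
  [exists k : 'I_n.+1, (iter k par v == a) &&
     [forall j : 'I_n.+1, (j < k) ==> (iter j par v != 1)]].

Definition ndesc (n : nat) (par : nat -> nat) (c : nat) : nat :=
  #|[set w : 'I_n.+1 | is_vertex n w && anc n par c w]|.

Definition children (n : nat) (par : nat -> nat) (l : nat) : seq nat :=
  [seq c <- iota 2 n.-1 | par c == l].

Definition is_preorder_labeling (n : nat) (par : nat -> nat) : Prop :=
  forall l, is_vertex n l ->
    exists s : seq nat, perm_eq s (children n par l) /\
      forall i, i < size s ->
        nth 0 s i = l + 1 + \sum_(j < i) ndesc n par (nth 0 s j).

Definition is_lca (n : nat) (par : nat -> nat) (ws : seq nat) (x : nat) : Prop :=
  is_vertex n x /\ all (anc n par x) ws /\
  forall y, is_vertex n y -> y != x -> anc n par x y -> ~~ all (anc n par y) ws.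

(* Main.v *)
Require Import Defs.
From mathcomp Require Import all_boot zify.
Set Implicit Arguments. Unset Strict Implicit.

Definition up (par : nat -> nat) (a w : nat) : Prop :=
  exists k, iter k par w = a /\ forall j, j < k -> iter j par w != 1.

Lemma iter_vertex n par w k : is_rooted_tree n par -> is_vertex n w ->
  (forall j, j < k -> iter j par w != 1) -> is_vertex n (iter k par w).
Proof.
move=> [H1 Ht] Hw; elim: k => [|k IH] Hj //=.
have := IH (fun j hj => Hj j (ltnW hj)); have := Hj k (ltnSn k).
rewrite /is_vertex => ne /andP[h1 h2].
have H2 : 2 <= iter k par w <= n by lia.
by case: (Ht _ H2).
Qed.

Lemma iter_periodic (f : nat -> nat) x i p : iter (i + p) f x = iter i f x ->
  forall m r, iter (i + m * p + r) f x = iter (i + r) f x.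
Proof.
move=> E; elim=> [|m IH] r; first by rewrite mul0n addn0.
have -> : i + m.+1 * p + r = (r + m * p) + (i + p) by rewrite mulSn; lia.
rewrite iterD E -iterD.
by have -> : r + m * p + i = i + m * p + r by lia.
Qed.

Lemma up_bound n par a w : is_rooted_tree n par -> is_vertex n w ->
  forall k, iter k par w = a -> (forall j, j < k -> iter j par w != 1) -> k < n.
Proof.
move=> Htr Hw k Ek Hj.
have Hvs : forall j, j < k -> 2 <= iter j par w <= n.
  move=> j hj; have := iter_vertex Htr Hw (fun l hl => Hj l (ltn_trans hl hj)).
  have := Hj j hj; rewrite /is_vertex; lia.
set s := [seq iter j par w | j <- iota 0 k].
have [Hu|Hnu] := boolP (uniq s).
  have : size s <= size (iota 2 n.-1).
    apply: uniq_leq_size => // z /mapP[j]; rewrite mem_iota => hj ->.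
    rewrite mem_iota; rewrite add0n in hj; case/andP: (Hvs j hj) => h1 h2; rewrite h1 /=; lia.
  have Hn1 : 1 <= n by case: Htr.
  rewrite size_map !size_iota; lia.
exfalso.
have [i [j [/andP[hij hjk] E]]] : exists i j, i < j < k /\ iter i par w = iter j par w.
  move/uniqPn: Hnu => /(_ 0) [i [j [hij hj E]]].
  exists i, j; move: hj; rewrite size_map size_iota => hj; split; first lia.
  move: E; rewrite !(nth_map 0) ?size_iota ?nth_iota /=; try lia.
  by rewrite !add0n.
have [K EK] : exists K, iter K par w = 1.
  case: Htr => _ Ht; case: (w =P 1) => [->|ne]; first by exists 0.
  have : 2 <= w <= n by move: Hw; rewrite /is_vertex; lia.
  by move/Ht => [_ []] K EK; exists K.
have hK : k <= K.
  rewrite leqNgt; apply/negP => hK; by move: (Hj K hK); rewrite EK.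
have := iter_periodic (p := j - i) (x := w) (f := par) (i := i).
have -> : i + (j - i) = j by lia.
move=> /(_ (esym E) ((K - i) %/ (j - i)) ((K - i) %% (j - i))).
have -> : i + (K - i) %/ (j - i) * (j - i) + (K - i) %% (j - i) = K.
  have := divn_eq (K - i) (j - i); lia.
rewrite EK => /esym; apply/eqP; apply: Hj.
have : (K - i) %% (j - i) < j - i by rewrite ltn_mod; lia.
lia.
Qed.

Lemma anc_up n par a w : anc n par a w -> up par a w.
Proof.
case/existsP=> k /andP[/eqP Ek /forallP Hj]; exists k; split => // j hj.
have hjn : j < n.+1 by apply: ltn_trans hj (ltn_ord k).
by have := Hj (Ordinal hjn); rewrite /= hj.
Qed.

Lemma up_anc n par a w : is_rooted_tree n par -> is_vertex n w ->
  up par a w -> anc n par a w.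
Proof.
move=> Htr Hw [k [Ek Hj]].
have hk : k < n.+1 by have := up_bound Htr Hw Ek Hj; lia.
apply/existsP; exists (Ordinal hk); rewrite /= Ek eqxx /=.
by apply/forallP => j; apply/implyP => hj; apply: Hj.
Qed.

Lemma up_vertex n par a w : is_rooted_tree n par -> is_vertex n w ->
  up par a w -> is_vertex n a.
Proof. by move=> Htr Hw [k [<- Hj]]; apply: iter_vertex. Qed.

Lemma up_refl par a : up par a a.
Proof. by exists 0. Qed.

Lemma up_trans par a b c : up par a b -> up par b c -> up par a c.
Proof.
move=> [k1 [E1 H1]] [k2 [E2 H2]]; exists (k1 + k2); split.
  by rewrite iterD E2.
move=> j hj; case: (ltnP j k2) => hj2; first exact: H2.
have -> : j = (j - k2) + k2 by lia.
rewrite iterD E2; apply: H1; lia.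
Qed.

Lemma up_chain par a b w : up par a w -> up par b w -> up par a b \/ up par b a.
Proof.
move=> [ka [Ea Ha]] [kb [Eb Hb]]; case: (leqP ka kb) => h.
  right; exists (kb - ka); split.
    by rewrite -Ea -iterD subnK.
  move=> j hj; rewrite -Ea -iterD; apply: Hb; lia.
left; exists (ka - kb); split.
  by rewrite -Eb -iterD subnK // ltnW.
move=> j hj; rewrite -Eb -iterD; apply: Ha; lia.
Qed.

Lemma up_par par c : c != 1 -> up par (par c) c.
Proof. by move=> hc; exists 1; split => // j; case: j. Qed.

Definition dset n par a : {set 'I_n.+1} :=
  [set w : 'I_n.+1 | is_vertex n w && anc n par a w].

Lemma ndescE n par a : ndesc n par a = #|dset n par a|.
Proof. by []. Qed.

Lemma in_dset n par a (w : 'I_n.+1) :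
  (w \in dset n par a) = is_vertex n w && anc n par a w.
Proof. by rewrite inE. Qed.

Lemma self_in_dset n par a (ha : a < n.+1) : is_rooted_tree n par -> is_vertex n a ->
  Ordinal ha \in dset n par a.
Proof. move=> Htr Ha; by rewrite in_dset /= Ha (up_anc Htr Ha (up_refl _ _)). Qed.

Lemma ndesc_pos n par a : is_rooted_tree n par -> is_vertex n a -> 0 < ndesc n par a.
Proof.
move=> Htr Ha; have ha : a < n.+1 by move: Ha; rewrite /is_vertex; lia.
by rewrite ndescE; apply/card_gt0P; exists (Ordinal ha); apply: self_in_dset.
Qed.

Definition Pint n par c := forall w, is_vertex n w -> anc n par c w ->
  c <= w < c + ndesc n par c.

Lemma core n par a : is_rooted_tree n par -> is_preorder_labeling n par ->
  (forall c, is_vertex n c -> a < c -> Pint n par c) -> is_vertex n a -> Pint n par a.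
Proof.
move=> Htr Hpre IH Ha.
have Hs : exists s : seq nat, perm_eq s (children n par a) /\
      forall i, i < size s ->
        nth 0 s i = a + 1 + \sum_(j < i) ndesc n par (nth 0 s j) := Hpre a Ha.
case: Hs => s [Hperm Hlab].
have Hch : forall c, c \in s -> [/\ is_vertex n c, par c = a, c != 1 & a < c].
  move=> c cs; have := cs; rewrite (perm_mem Hperm) mem_filter mem_iota => /andP[/eqP Ep hc].
  split => //; first (rewrite /is_vertex; lia); first lia.
  have hi : index c s < size s by rewrite index_mem.
  have := Hlab _ hi; rewrite nth_index //; lia.
set t := fun j => a + 1 + \sum_(l < j) ndesc n par (nth 0 s l).
have ha : a < n.+1 by move: Ha; rewrite /is_vertex; lia.
have Hcard : forall j, j <= size s ->
    t j - a <= #|[set w in dset n par a | nat_of_ord w < t j]|.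
  elim=> [|j IHj] hj.
    rewrite /t big_ord0 addn0; have -> : a + 1 - a = 1 by lia.
    apply/card_gt0P; exists (Ordinal ha); rewrite inE self_in_dset //=; lia.
  set sj := nth 0 s j.
  have sjs : sj \in s by apply: mem_nth.
  have [Hsv Hsp Hs1 Hsa] := Hch _ sjs.
  have Hst : sj = t j by rewrite /sj Hlab.
  have HI := IH sj Hsv Hsa.
  have Htj : t j.+1 = t j + ndesc n par sj by rewrite /t big_ord_recr /= addnA.
  set A := [set w in dset n par a | nat_of_ord w < t j].
  have sub : A :|: dset n par sj \subset [set w in dset n par a | nat_of_ord w < t j.+1].
    apply/subsetP => w; rewrite !inE => /orP[/andP[/andP[wv wa] wl]|/andP[wv ws]].
      by rewrite wv wa /= Htj; lia.
    have := HI w wv ws => hw.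
    rewrite wv /= Htj -Hst; apply/andP; split; last by move: hw; lia.
    apply: up_anc Htr wv _; apply: up_trans (anc_up ws).
    rewrite -Hsp; exact: up_par.
  have disj : A :&: dset n par sj = set0.
    apply/setP => w; rewrite !inE; apply/negP => /andP[/andP[/andP[_ _] wl] /andP[wv ws]].
    have := HI w wv ws; lia.
  have := subset_leq_card sub; rewrite cardsU disj cards0 subn0 -ndescE.
  have := IHj (ltnW hj); rewrite -/A; lia.
move=> w Hw /anc_up [k [Ek Hj]].
case: k Ek Hj => [|k] Ek Hj.
  rewrite /= in Ek; subst w; rewrite leqnn /=; have := ndesc_pos Htr Ha; lia.
set c := iter k par w.
have Hc1 : c != 1 := Hj k (ltnSn k).
have Hcv : is_vertex n c := iter_vertex Htr Hw (fun j hj => Hj j (ltnW hj)).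
have Ec : par c = a by rewrite -Ek iterS.
have hcw : up par c w by exists k; split => // j hj; apply: Hj; lia.
have cs : c \in s.
  rewrite (perm_mem Hperm) mem_filter Ec eqxx mem_iota /=.
  move: Hcv Hc1; rewrite /is_vertex; lia.
have [_ _ _ hac] := Hch _ cs.
have /andP[hcw1 hcw2] := IH c Hcv hac w Hw (up_anc Htr Hw hcw).
have hi : index c s < size s by rewrite index_mem.
have Hti : t (index c s).+1 = c + ndesc n par c.
  by rewrite /t big_ord_recr /= nth_index //; have := Hlab _ hi; rewrite nth_index //; move=> E; rewrite addnA -E.
have := Hcard _ hi; rewrite Hti.
have : #|[set w in dset n par a | nat_of_ord w < c + ndesc n par c]| <= ndesc n par a.
  by rewrite ndescE; apply: subset_leq_card; apply/subsetP => z; rewrite inE => /andP[].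
lia.
Qed.

Lemma interval_sub n par : is_rooted_tree n par -> is_preorder_labeling n par ->
  forall a, is_vertex n a -> Pint n par a.
Proof.
move=> Htr Hpre.
suff H : forall m a, n - a <= m -> is_vertex n a -> Pint n par a.
  by move=> a; apply: H (leqnn _).
elim=> [|m IH] a hm Ha; apply: core => // c Hc hac.
  by move: Hc Ha; rewrite /is_vertex; lia.
apply: IH => //; move: Hc; rewrite /is_vertex; lia.
Qed.

Lemma interval_iff n par a w : is_rooted_tree n par -> is_preorder_labeling n par ->
  is_vertex n a -> is_vertex n w ->
  anc n par a w = (a <= w < a + ndesc n par a).
Proof.
move=> Htr Hpre Ha Hw; apply/idP/idP; first exact: interval_sub.
move=> hw.
set s1 := [seq nat_of_ord z | z <- enum (dset n par a)].
have Hu : uniq s1 by rewrite map_inj_uniq ?enum_uniq //; apply: val_inj.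
have Hsub : {subset s1 <= iota a (ndesc n par a)}.
  move=> z /mapP[z' ]; rewrite mem_enum in_dset => /andP[zv za] ->.
  rewrite mem_iota; have := interval_sub Htr Hpre Ha zv za; lia.
have Hsz : size (iota a (ndesc n par a)) <= size s1.
  by rewrite size_iota size_map -cardE.
have [_ Heq] := uniq_min_size Hu Hsub Hsz.
have : w \in s1 by rewrite Heq mem_iota; lia.
by case/mapP => z; rewrite mem_enum in_dset => /andP[_ za] ->.
Qed.

Lemma bigmin_le_seq (I : eqType) (r : seq I) (G : I -> nat) d i :
  i \in r -> \big[minn/d]_(j <- r) G j <= G i.
Proof.
elim: r => [|x r IH] //; rewrite in_cons big_cons => /orP[/eqP ->|hi].
  exact: geq_minl.
by apply: leq_trans (geq_minr _ _) (IH hi).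
Qed.

Lemma bigmin_le k (F : nat -> nat) d i : i < k -> \big[minn/d]_(j < k) F j <= F i.
Proof.
move=> hi.
have H := bigmin_le_seq (fun j : 'I_k => F j) d (mem_index_enum (Ordinal hi)).
exact: H.
Qed.

Lemma bigmin_attained k (F : nat -> nat) : 0 < k ->
  exists2 i, i < k & \big[minn/F 0]_(j < k) F j = F i.
Proof.
move=> hk; apply: (big_ind (fun x => exists2 i, i < k & x = F i)).
- by exists 0.
- move=> x y [i hi ->] [j hj ->]; case: (leqP (F i) (F j)) => h.
    by exists i => //; apply/minn_idPl.
  by exists j => //; apply/minn_idPr; apply: ltnW.
- by move=> i _; exists i.
Qed.

Lemma bigmax_attained k (F : nat -> nat) : 0 < k ->
  exists2 i, i < k & \max_(j < k) F j = F i.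
Proof.
move=> hk; have hc : 0 < #|'I_k| by rewrite card_ord.
by case: (eq_bigmax (fun j : 'I_k => F j) hc) => i ->; exists i.
Qed.

Lemma bigmax_ge k (F : nat -> nat) i : i < k -> F i <= \max_(j < k) F j.
Proof. move=> hi; have H := @leq_bigmax _ (fun j : 'I_k => F j) (Ordinal hi); exact: H. Qed.

Lemma all2E (P : pred nat) p q : all P [:: p; q] = P p && P q.
Proof. by rewrite /= andbT. Qed.

Unset Implicit Arguments.

Theorem corollary5p4 (n : nat) (par : nat -> nat)
    (Htree : is_rooted_tree n par) (Hpre : is_preorder_labeling n par)
    (k : nat) (hk : 0 < k) (u v : nat -> nat)
    (Hu : forall i, i < k -> is_vertex n (u i))
    (Hv : forall i, i < k -> is_vertex n (v i))
    (Huv : forall i, i < k -> u i <= v i)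
    (x : nat -> nat) (Hx : forall i, i < k -> is_lca n par [:: u i; v i] (x i))
    (y : nat) (Hy : is_lca n par [seq x i | i <- iota 0 k] y) :
  is_lca n par [:: \big[minn/u 0]_(i < k) u i; \max_(i < k) v i] y /\
  (forall z, is_lca n par [:: \big[minn/u 0]_(i < k) u i; \max_(i < k) v i] z -> z = y).
Proof.
set mU := \big[minn/u 0]_(i < k) u i.
set mV := \max_(i < k) v i.
have [i0 hi0 EU] := bigmin_attained u hk.
have [i1 hi1 EV] := bigmax_attained v hk.
rewrite -/mU in EU; rewrite -/mV in EV.
have HmU : is_vertex n mU by rewrite EU; apply: Hu.
have HmV : is_vertex n mV by rewrite EV; apply: Hv.
have HlbU : forall i, i < k -> mU <= u i by move=> i hi; apply: bigmin_le.
have HubV : forall i, i < k -> v i <= mV by move=> i hi; apply: bigmax_ge.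
have Key : forall i, i < k -> forall a, is_vertex n a ->
    anc n par a (x i) = anc n par a (u i) && anc n par a (v i).
  move=> i hi a Ha; have [Hxv [Hall Hmin]] := Hx i hi.
  move: Hall; rewrite all2E => /andP[xu xv].
  apply/idP/idP.
    move=> /anc_up ax; apply/andP; split.
      exact: up_anc Htree (Hu i hi) (up_trans ax (anc_up xu)).
    exact: up_anc Htree (Hv i hi) (up_trans ax (anc_up xv)).
  move=> /andP[au av].
  case: (up_chain (anc_up au) (anc_up xu)) => [h|h].
    exact: up_anc Htree Hxv h.
  case: (eqVneq a (x i)) => [->|ne].
    exact: up_anc Htree Hxv (up_refl _ _).
  have := Hmin a Ha ne (up_anc Htree Ha h).
  by rewrite all2E au av.
have Key2 : forall a, is_vertex n a ->
    all (anc n par a) [seq x i | i <- iota 0 k] = all (anc n par a) [:: mU; mV].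
  move=> a Ha; rewrite all2E; apply/idP/idP.
    move=> /allP H.
    have h0 : anc n par a (x i0) by apply: H; apply/mapP; exists i0; rewrite // mem_iota; lia.
    have h1 : anc n par a (x i1) by apply: H; apply/mapP; exists i1; rewrite // mem_iota; lia.
    rewrite (Key i0 hi0 a Ha) in h0; rewrite (Key i1 hi1 a Ha) in h1.
    move: h0 h1 => /andP[h0 _] /andP[_ h1].
    by rewrite EU EV h0 h1.
  move=> /andP[aU aV]; apply/allP => z /mapP[i]; rewrite mem_iota => hi ->.
  have hik : i < k by lia.
  rewrite (Key i hik a Ha).
  rewrite (interval_iff Htree Hpre Ha HmU) in aU.
  rewrite (interval_iff Htree Hpre Ha HmV) in aV.
  rewrite !(interval_iff Htree Hpre Ha) ?Hu ?Hv //.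
  have := HlbU i hik; have := HubV i hik; have := Huv i hik; lia.
have [Hyv [Hyall Hymin]] := Hy.
have HyL : is_lca n par [:: mU; mV] y.
  split => //; split; first by rewrite -Key2.
  move=> z Hz ne hyz; rewrite -Key2 //; exact: Hymin.
split => // z [Hzv [Hzall Hzmin]].
move: (Hzall) (HyL) => /andP[zU _] [_ [/andP[yU _] _]].
apply/eqP; apply/negP => /negP ne.
case: (up_chain (anc_up zU) (anc_up yU)) => h.
  have ne2 : y != z by rewrite eq_sym.
  have := Hzmin y Hyv ne2 (up_anc Htree Hyv h).
  by case: HyL => _ [-> _].
have := Hymin z Hzv ne (up_anc Htree Hzv h).
by rewrite Key2 // Hzall.
Qed.
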